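(* Let $V$ be a finite vocabulary. Each word $x\in V$ has a synonym set $S_x\subseteq V$ with $x\in S_x$, the synonym relation being symmetric, and a nonempty perturbation set $P_x\subseteq V$. Fix integers $L\ge1$, $0\le R\le L$ and a finite label set $\mathcal{Y}$ with $|\mathcal{Y}|\ge2$. For $X=x_1,\ldots,x_L\in V^L$ let $S_X=\{X'\in V^L: \sum_i\mathbb{I}\{x'_i\ne x_i\}\le R,\ x'_i\in S_{x_i}\ \forall i\}$ and $\Pi_X(Z)=\prod_{i=1}^L\mathbb{I}\{z_i\in P_{x_i}\}/|P_{x_i}|$. For a classifier $h:V^L\to\mathcal{Y}$ write $g^{\mathrm{RS}}_h(X,c)=\mathbb{P}_{Z\sim\Pi_X}(h(Z)=c)$ and $h^{\mathrm{RS}}(X)=\arg\max_c g^{\mathrm{RS}}_h(X,c)$. Assume $|P_x|=|P_{x'}|$ for every word $x$ and every $x'\in S_x$. Let $q_x=\min_{x'\in S_x}|P_x\cap P_{x'}|/|P_x|$, and for a sentence $X$ order its positions $i_1,\ldots,i_L$ so that $q_{x_{i_1}}\le\cdots\le q_{x_{i_L}}$ and put $q_X=1-\prod_{j=1}^R q_{x_{i_j}}$. Let $f:V^L\to\mathcal{Y}$ be a classifier and $X\in V^L$ a sentence with $f^{\mathrm{RS}}(X)=y$, and let $y_B=\arg\max_{c\ne y}g^{\mathrm{RS}}_f(X,c)$. Then there exists a classifier $f_*:V^L\to\mathcal{Y}$ such that $g^{\mathrm{RS}}_{f_*}(X,c)=g^{\mathrm{RS}}_f(X,c)$ for $c\in\{y,y_B\}$,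 and $$\min_{X'\in S_X}g^{\mathrm{RS}}_{f_*}(X',y)=\max\big(g^{\mathrm{RS}}_{f_*}(X,y)-q_X,0\big),\qquad \max_{X'\in S_X}g^{\mathrm{RS}}_{f_*}(X',y_B)=\min\big(g^{\mathrm{RS}}_{f_*}(X,y_B)+q_X,1\big).$$
   Context: This expresses that the bounds $g^{\mathrm{RS}}(X,c)\pm q_X$ on the smoothed soft scores over adversarial sentences $X'\in S_X$ cannot be improved using only the values $g^{\mathrm{RS}}(X,y)$ and $g^{\mathrm{RS}}(X,y_B)$. *)

(* Defs.v *)
From mathcomp Require Import all_boot all_order all_algebra.
Set Implicit Arguments. Unset Strict Implicit. Unset Printing Implicit Defensive.
Import Order.TTheory GRing.Theory Num.Theory.
Local Open Scope ring_scope.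

Notation sentence V L := {ffun 'I_L -> V}.

Definition adv_set (V : finType) (S : V -> {set V}) (L r : nat)
    (X : sentence V L) : {set sentence V L} :=
  [set X' : sentence V L | (#|[set i | X' i != X i]| <= r)%N
                           && [forall i, X' i \in S (X i)]].

Definition PiX (K : realFieldType) (V : finType) (P : V -> {set V}) (L : nat)
    (X Z : sentence V L) : K :=
  \prod_(i < L) ((Z i \in P (X i))%:R / (#|P (X i)|)%:R).

Definition gRS (K : realFieldType) (V : finType) (P : V -> {set V}) (L : nat)
    (Y : finType) (h : sentence V L -> Y) (X : sentence V L) (c : Y) : K :=
  \sum_(Z : sentence V L) PiX K P X Z * (h Z == c)%:R.

(* q_x = min_{x' in S_x} |P_x ∩ P_x'| / |P_x|  (all values are <= 1 and S_x is
   nonempty, so 1 is a harmless initial value for the iterated minimum) *)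
Definition qword (K : realFieldType) (V : finType) (S P : V -> {set V}) (x : V) : K :=
  \big[Num.min/1]_(x' in S x) ((#|P x :&: P x'|)%:R / (#|P x|)%:R).

Definition qsent (K : realFieldType) (V : finType) (S P : V -> {set V}) (L r : nat)
    (X : sentence V L) : K :=
  1 - \prod_(v <- take r (sort <=%R [seq qword K S P (X i) | i <- enum 'I_L])) v.

(* Main.v *)
Require Import Defs.
From mathcomp Require Import all_boot all_order all_algebra.
From mathcomp Require Import zify ring lra.
Import Order.TTheory GRing.Theory Num.Theory.
Set Implicit Arguments. Unset Strict Implicit. Unset Printing Implicit Defensive.
Local Open Scope ring_scope.


Definition cnt (T Y : finType) (h : T -> Y) (B : {set T}) (c : Y) : nat :=
  #|[set Z in B | h Z == c]|.

Lemma cnt_count (T Y : finType) (h : T -> Y) (B : {set T}) c :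
  cnt h B c = count (fun Z => h Z == c) (enum B).
Proof.
rewrite /cnt -size_filter -(card_uniqP _); last by rewrite filter_uniq // enum_uniq.
by apply: eq_card => Z; rewrite !inE mem_filter mem_enum andbC.
Qed.

Lemma count_lt (a t m : nat) :
  count (fun k => a + k < t)%N (iota 0 m) = minn m (t - a).
Proof.
elim: m => [|m IH]; first by rewrite /= min0n.
rewrite -addn1 iotaD count_cat IH /= add0n addn0; case: ltnP => H; lia.
Qed.

Lemma count_ge (a t m : nat) :
  count (fun k => t <= a + k)%N (iota 0 m) = (m - (t - a))%N.
Proof.
elim: m => [|m IH] //.
rewrite -addn1 iotaD count_cat IH /= add0n addn0; case: leqP => H; lia.
Qed.

Lemma map_index_uniq (T : eqType) (s : seq T) :
  uniq s -> map (index^~ s) s = iota 0 (size s).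
Proof.
elim: s => [|x s IH] //= /andP [xs us].
rewrite eqxx /=; congr cons.
rewrite -[1%N]addn0 iotaDl -IH // -map_comp; apply/eq_in_map => z zs /=.
rewrite ifN ?add1n //; apply: contraNN xs => /eqP ->; exact: zs.
Qed.

Lemma count3 (T : Type) (p1 p2 p3 : pred T) s :
  (forall x, p1 x + p2 x + p3 x = 1)%N ->
  (count p1 s + count p2 s + count p3 s)%N = size s.
Proof.
move=> H; elim: s => [|x s IH] //=; have := H x; lia.
Qed.

Lemma cnt_bound (T Y : finType) (h : T -> Y) (B1 B2 : {set T}) c :
  #|B2| = #|B1| ->
  (cnt h B1 c <= cnt h B2 c + #|B1 :\: B2|)%N /\
  (cnt h B2 c <= cnt h B1 c + #|B1 :\: B2|)%N.
Proof.
move=> e.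
have gen : forall (U W : {set T}), (cnt h U c <= cnt h W c + #|U :\: W|)%N.
  move=> U W; rewrite /cnt -(cardsID W [set Z in U | h Z == c]) leq_add //.
    by apply: subset_leq_card; apply/subsetP => Z; rewrite !inE; case: (Z \in U); case: (Z \in W); case: (h Z == c).
  by apply: subset_leq_card; apply/subsetP => Z; rewrite !inE; case: (Z \in U); case: (Z \in W); case: (h Z == c).
split; first exact: gen.
have : #|B2 :\: B1| = #|B1 :\: B2|.
  have := cardsID B2 B1; have := cardsID B1 B2; rewrite setIC; lia.
by move=> <-; apply: gen.
Qed.

Lemma perm_split (T : finType) (B U W : {set T}) :
  U :&: W = set0 -> (forall x, (x \in B) = (x \in U) || (x \in W)) ->
  perm_eq (enum U ++ enum W) (enum B).
Proof.
move=> UW HB; apply: uniq_perm; rewrite ?enum_uniq //.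
  rewrite cat_uniq !enum_uniq andbT /=; apply/hasPn => x; rewrite !mem_enum.
  move=> xW; apply/negP => xU.
  have : x \in U :&: W by rewrite inE xU xW.
  by rewrite UW inE.
by move=> x; rewrite mem_cat !mem_enum HB.
Qed.

Lemma construct (T Y : finType) (BX BS : {set T}) (f : T -> Y) (y yB : Y) :
  yB != y -> #|BS| = #|BX| ->
  exists fs : T -> Y,
   [/\ cnt fs BX y = cnt f BX y, cnt fs BX yB = cnt f BX yB,
       cnt fs BS y = (cnt f BX y - #|BX :\: BS|)%N &
       cnt fs BS yB = minn (cnt f BX yB + #|BX :\: BS|) #|BX| ].
Proof.
move=> neq eS.
set A := BX :\: BS; set O := BX :&: BS.
set s2 := enum A ++ enum O.
set Ly := [seq Z <- enum BX | f Z == y].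
set Lo := [seq Z <- enum BX | (f Z != y) && (f Z != yB)].
set LB := [seq Z <- enum BX | f Z == yB].
set s1 := Ly ++ Lo ++ LB.
set N := #|BX|.
have ny : cnt f BX y = size Ly by rewrite cnt_count size_filter.
have nB : cnt f BX yB = size LB by rewrite cnt_count size_filter.
have s1N : size s1 = N.
  rewrite /s1 !size_cat !size_filter addnA /N cardE; apply: count3 => x /=.
  case: eqP => [->|]; first by rewrite eq_sym (negbTE neq).
  by case: eqP.
have F1 : forall k Z, (k < N)%N ->
   ((f (nth Z s1 k) == y) = (k < size Ly)%N) /\
   ((f (nth Z s1 k) == yB) = (N - size LB <= k)%N).
  move=> k Z kN.
  have sz : (size Ly + size Lo + size LB = N)%N by rewrite -s1N /s1 !size_cat addnA.
  rewrite /s1 nth_cat; case: ltnP => k1.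
    have : nth Z Ly k \in Ly by apply: mem_nth.
    rewrite mem_filter => /andP [/eqP -> _]; rewrite eqxx eq_sym (negbTE neq).
    by split; apply/idP/idP; intros; lia.
  rewrite nth_cat; case: ltnP => k2.
    have : nth Z Lo (k - size Ly) \in Lo by apply: mem_nth.
    rewrite mem_filter => /andP [/andP [/negbTE -> /negbTE ->] _].
    by split; apply/idP/idP; intros; lia.
  have hk : (k - size Ly - size Lo < size LB)%N by lia.
  have : nth Z LB (k - size Ly - size Lo) \in LB by apply: mem_nth.
  rewrite mem_filter => /andP [/eqP -> _]; rewrite eqxx (negbTE neq).
  by split; apply/idP/idP; intros; lia.
have AO : A :&: O = set0.
  apply/setP => x; rewrite !inE; by case: (x \in BS); case: (x \in BX).
have p2 : perm_eq s2 (enum BX).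
  apply: perm_split => // x; rewrite !inE; by case: (x \in BS); case: (x \in BX).
have us2 : uniq s2 by rewrite (perm_uniq p2) enum_uniq.
have s2N : size s2 = N by rewrite (perm_size p2) -cardE.
have cAO : (#|A| + #|O| = N)%N by rewrite addnC /N -(cardsID BS BX).
have pS : perm_eq (enum O ++ enum (BS :\: BX)) (enum BS).
  apply: perm_split.
    apply/setP => x; rewrite !inE; by case: (x \in BS); case: (x \in BX).
  move=> x; rewrite !inE; by case: (x \in BS); case: (x \in BX).
have cBS : #|BS :\: BX| = #|A|.
  have := cardsID BX BS; have := cardsID BS BX; rewrite setIC -/A; lia.
set fs := fun Z => if Z \in BX then f (nth Z s1 (index Z s2)) else yB.
have fsBX : forall Z, Z \in BX -> ((fs Z == y) = (index Z s2 < size Ly)%N) /\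
                   ((fs Z == yB) = (N - size LB <= index Z s2)%N).
  move=> Z ZB; rewrite /fs ZB; apply: F1; rewrite -s2N index_mem.
  by rewrite (perm_mem p2) mem_enum.
have idxO : forall Z, Z \in O -> index Z s2 = (#|A| + index Z (enum O))%N.
  move=> Z ZO; rewrite /s2 index_cat mem_enum ifF ?cardE //.
  apply/negP => ZA; have : Z \in A :&: O by rewrite inE ZA ZO.
  by rewrite AO inE.
have sLyN : (size Ly <= N)%N by rewrite -s1N /s1 size_cat leq_addr.
have sLBN : (size LB <= N)%N by rewrite -s1N /s1 !size_cat addnA leq_addl.
have cntBX : forall c (P : nat -> bool), (forall Z, Z \in BX -> (fs Z == c) = P (index Z s2)) ->
    cnt fs BX c = count (fun k => P (0 + k)%N) (iota 0 N).
  move=> c P HP; rewrite cnt_count -(permP p2) -s2N -map_index_uniq //.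
  rewrite count_map; apply: eq_in_count => Z; rewrite (perm_mem p2) mem_enum => ZB.
  by rewrite /= HP.
have cntO : forall c (P : nat -> bool), (forall Z, Z \in BX -> (fs Z == c) = P (index Z s2)) ->
    count (fun Z => fs Z == c) (enum O) = count (fun k => P (#|A| + k)%N) (iota 0 #|O|).
  move=> c P HP; have u : uniq (enum O) by apply: enum_uniq.
  rewrite [#|O|]cardE -(map_index_uniq u) count_map.
  apply: eq_in_count => Z; rewrite mem_enum => ZO /=.
  rewrite HP -?idxO //; move: ZO; rewrite inE => /andP [] //.
have outB : forall Z, Z \in BS :\: BX -> fs Z = yB.
  by move=> Z; rewrite inE /fs => /andP [/negbTE -> _].
exists fs; split.
- rewrite (cntBX y (fun k => k < size Ly)%N); last by move=> Z /fsBX [].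
  by rewrite count_lt subn0 ny; apply/minn_idPr.
- rewrite (cntBX yB (fun k => N - size LB <= k)%N); last by move=> Z /fsBX [].
  by rewrite count_ge subn0 nB; lia.
- rewrite cnt_count -(permP pS) count_cat.
  rewrite (cntO y (fun k => k < size Ly)%N); last by move=> Z /fsBX [].
  rewrite count_lt (eq_in_count (a2 := pred0)) ?count_pred0.
    by rewrite ny -/A; lia.
  by move=> Z; rewrite mem_enum => /outB ->; rewrite (negbTE neq).
- rewrite cnt_count -(permP pS) count_cat.
  rewrite (cntO yB (fun k => N - size LB <= k)%N); last by move=> Z /fsBX [].
  rewrite count_ge (eq_in_count (a2 := predT)) ?count_predT.
    by rewrite -cardE cBS nB -/A; lia.
  by move=> Z; rewrite mem_enum => /outB ->; rewrite eqxx.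
Qed.

Lemma prod_take (K : realFieldType) (L r : nat) (qi : 'I_L -> K) :
 (forall i, 0 <= qi i <= 1) -> (r <= L)%N ->
 [/\ \prod_(v <- take r (sort <=%R [seq qi i | i <- enum 'I_L])) v
      = \prod_(i in take r (sort (relpre qi <=%R) (enum 'I_L))) qi i,
     #|[set i in take r (sort (relpre qi <=%R) (enum 'I_L))]| = r &
     forall C : {set 'I_L}, (#|C| <= r)%N ->
       \prod_(i in take r (sort (relpre qi <=%R) (enum 'I_L))) qi i <= \prod_(i in C) qi i].
Proof.
move=> q01 rL.
set e := sort (relpre qi <=%R) (enum 'I_L).
have ue : uniq e by rewrite sort_uniq enum_uniq.
have se : size e = L by rewrite size_sort size_enum_ord.
have ute : uniq (take r e) by apply: take_uniq.
have stl : size (take r e) = r by rewrite size_takel // se.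
have cT : #|[set i in take r e]| = r by rewrite cardsE (card_uniqP ute).
have sorte : sorted (relpre qi <=%R) e.
  by apply: sort_sorted => a b; apply: le_total.
have key : forall t c, t \in take r e -> c \notin take r e -> qi t <= qi c.
  move=> t c tT cT'.
  have te : t \in e by rewrite -(cat_take_drop r e) mem_cat tT.
  have ce : c \in e by rewrite mem_sort mem_enum.
  have it : (index t e < r)%N.
    rewrite -[e in index _ e](cat_take_drop r e) index_cat tT.
    by rewrite -[X in (_ < X)%N]stl index_mem.
  have ic : (r <= index c e)%N.
    rewrite -[e in index _ e](cat_take_drop r e) index_cat (negbTE cT') stl.
    exact: leq_addr.
  have := @sorted_leq_nth _ (relpre qi <=%R) _ _ t e sorte (index t e) (index c e).
  rewrite /= !nth_index //; apply.
  - move=> a b d /= h1 h2; exact: le_trans h1 h2.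
  - by move=> a /=.
  - by rewrite inE index_mem.
  - by rewrite inE index_mem.
  - lia.
split => //.
  by rewrite sort_map -map_take big_map big_uniq.
move=> C hC.
set T := [set i in take r e].
have -> : \prod_(i in take r e) qi i = \prod_(i in T) qi i.
  by apply: eq_bigl => i; rewrite inE.
rewrite (bigID (mem C) (mem T)) (bigID (mem T) (mem C)) /=.
have -> : \prod_(i in T | i \in C) qi i = \prod_(i in C | i \in T) qi i.
  by apply: eq_bigl => i; rewrite andbC.
apply: ler_wpM2l; first by apply: prodr_ge0 => i _; case/andP: (q01 i).
set th := \big[Num.min/1]_(i in C :\: T) qi i.
have th0 : 0 <= th by apply: le_bigmin => // i _; case/andP: (q01 i).
have th1 : th <= 1 by apply: bigmin_le_id.
have thT : forall t, t \in T -> qi t <= th.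
  move=> t tT; apply: le_bigmin; first by case/andP: (q01 t).
  move=> c; rewrite !inE => /andP [cT' _]; apply: key => //; by move: tT; rewrite inE.
have thC : forall c, c \in C :\: T -> th <= qi c.
  by move=> c cC; apply: bigmin_inf (le_refl _).
apply: (@le_trans _ _ (\prod_(i in T :\: C) th)).
  have -> : \prod_(i in T | i \notin C) qi i = \prod_(i in T :\: C) qi i.
    by apply: eq_bigl => i; rewrite !inE andbC.
  apply: ler_prod => i; rewrite inE => /andP [_ iT]; rewrite (thT _ iT) andbT; by case/andP: (q01 i).
apply: (@le_trans _ _ (\prod_(i in C :\: T) th)).
  rewrite !prodr_const; apply: ler_wiXn2l => //.
  have cT2 : #|T| = r by []. rewrite -(leq_add2l #|C :&: T|) (cardsID T C) setIC (cardsID C T) cT2 //.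
have -> : \prod_(i in C | i \notin T) qi i = \prod_(i in C :\: T) qi i.
  by apply: eq_bigl => i; rewrite !inE andbC.
by apply: ler_prod => i iC; rewrite th0 thC.
Qed.

Lemma cardbox (V : finType) (L : nat) (F : 'I_L -> {set V}) :
  #|[set Z : {ffun 'I_L -> V} | [forall i, Z i \in F i]]| = (\prod_i #|F i|)%N.
Proof.
have -> : #|[set Z : {ffun 'I_L -> V} | [forall i, Z i \in F i]]| = #|family (fun i => mem (F i))|.
  apply: eq_card => Z; rewrite inE; apply/forallP/familyP => H i; exact: H.
by rewrite card_family foldrE big_map big_enum.
Qed.

Definition boxX (V : finType) (P : V -> {set V}) (L : nat) (X : sentence V L) :=
  [set Z : sentence V L | [forall i, Z i \in P (X i)]].

Lemma PiX_box (K : realFieldType) (V : finType) (P : V -> {set V}) (L : nat) (X Z : sentence V L) :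
  PiX K P X Z = (Z \in boxX P X)%:R / (#|boxX P X|)%:R.
Proof.
rewrite /PiX prodf_div /boxX cardbox natr_prod; congr (_ / _).
rewrite inE; case: (boolP [forall i, Z i \in P (X i)]) => H.
  by rewrite big1 // => i _; rewrite (forallP H i).
move/forallPn: H => [i Hi]; rewrite (bigD1 i) //= (negbTE Hi) mul0r. by [].
Qed.

Lemma gRS_cnt (K : realFieldType) (V : finType) (P : V -> {set V}) (L : nat)
    (Y : finType) (h : sentence V L -> Y) (X : sentence V L) (c : Y) :
  gRS K P h X c = (cnt h (boxX P X) c)%:R / (#|boxX P X|)%:R.
Proof.
rewrite /gRS.
have -> : \sum_(Z : sentence V L) PiX K P X Z * (h Z == c)%:R
   = \sum_(Z : sentence V L) ((Z \in boxX P X) && (h Z == c))%:R / (#|boxX P X|)%:R.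
  apply: eq_bigr => Z _; rewrite PiX_box.
  by case: (Z \in boxX P X); case: (h Z == c); rewrite ?mulr1 ?mulr0 ?mul0r.
rewrite -mulr_suml -natr_sum; congr (_%:R / _).
rewrite /cnt -sum1_card [RHS]big_mkcond; apply: eq_bigr => Z _; rewrite inE.
by case: (_ && _).
Qed.

Lemma box_gt0 (V : finType) (P : V -> {set V}) (L : nat) (X : sentence V L) :
  (forall x, P x != set0) -> (0 < #|boxX P X|)%N.
Proof.
move=> HP; rewrite /boxX cardbox prodn_gt0 // => i; rewrite card_gt0; exact: HP.
Qed.

Lemma boxI (V : finType) (P : V -> {set V}) (L : nat) (X X' : sentence V L) :
  #|boxX P X :&: boxX P X'| = (\prod_i #|P (X i) :&: P (X' i)|)%N.
Proof.
rewrite -cardbox; apply: eq_card => Z; rewrite !inE.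
apply/andP/forallP => [[/forallP H1 /forallP H2] i|H]; first by rewrite inE H1 H2.
split; apply/forallP => i; have := H i; rewrite inE => /andP [] //.
Qed.

Definition wratio (K : realFieldType) (V : finType) (P : V -> {set V}) (x x' : V) : K :=
  (#|P x :&: P x'|)%:R / (#|P x|)%:R.

Lemma ratio_box (K : realFieldType) (V : finType) (P : V -> {set V}) (L : nat) (X X' : sentence V L) :
  (#|boxX P X :&: boxX P X'|)%:R / (#|boxX P X|)%:R = \prod_i wratio K P (X i) (X' i).
Proof. by rewrite boxI /boxX cardbox !natr_prod prodf_div. Qed.

Lemma ratio_same (K : realFieldType) (V : finType) (P : V -> {set V}) x :
  P x != set0 -> wratio K P x x = 1.
Proof. by move=> Hx; rewrite /wratio setIid divff // pnatr_eq0 -lt0n card_gt0. Qed.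

Lemma ratio01 (K : realFieldType) (V : finType) (P : V -> {set V}) x x' :
  0 <= wratio K P x x' <= 1.
Proof.
rewrite /wratio divr_ge0 //=.
case: (posnP #|P x|) => [->|h]; first by rewrite invr0 mulr0.
by rewrite ler_pdivrMr ?ltr0n // mul1r ler_nat subset_leq_card // subsetIl.
Qed.

Lemma qw_props (K : realFieldType) (V : finType) (S P : V -> {set V}) x :
  x \in S x -> P x != set0 ->
  [/\ 0 <= qword K S P x, qword K S P x <= 1,
      forall x', x' \in S x -> qword K S P x <= wratio K P x x' &
      exists2 x', x' \in S x & qword K S P x = wratio K P x x'].
Proof.
move=> xS Px; split.
- apply: le_bigmin => // i _; by case/andP: (ratio01 K P x i).
- exact: bigmin_le_id.
- move=> x' x'S; exact: bigmin_inf (le_refl _).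
- rewrite /qword; apply: (big_ind (fun v => exists2 x', x' \in S x & v = wratio K P x x')).
  + by exists x => //; rewrite ratio_same.
  + move=> a b [xa ha ->] [xb hb ->].
    have [h|h] := leP (wratio K P x xa) (wratio K P x xb).
      by exists xa => //; rewrite min_l.
    by exists xb => //; rewrite min_r // ltW.
  + by move=> x' x'S; exists x'.
Qed.

Section Reals.
Variable K : realFieldType.

Lemma divN_le (N x z : nat) : (0 < N)%N -> (x <= z)%N -> x%:R / N%:R <= z%:R / N%:R :> K.
Proof. by move=> N0 h; rewrite ler_pM2r ?invr_gt0 ?ltr0n // ler_nat. Qed.

Lemma divN_D (N x z : nat) : (x + z)%:R / N%:R = x%:R / N%:R + z%:R / N%:R :> K.
Proof. by rewrite natrD mulrDl. Qed.

Lemma divN_ge0 (N x : nat) : 0 <= x%:R / N%:R :> K.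
Proof. by rewrite divr_ge0. Qed.

Lemma divNN (N : nat) : (0 < N)%N -> N%:R / N%:R = 1 :> K.
Proof. by move=> N0; rewrite divff // pnatr_eq0 -lt0n. Qed.

Lemma rlA (n a N : nat) : (0 < N)%N ->
  ((n - a)%N)%:R / N%:R = Num.max (n%:R / N%:R - a%:R / N%:R) 0 :> K.
Proof.
move=> N0; case: (leqP a n) => h.
  have e2 : n%:R / N%:R = (n - a)%:R / N%:R + a%:R / N%:R :> K by rewrite -divN_D subnK.
  have h1 := divN_ge0 N (n - a).
  move: e2 h1; set u := (n - a)%:R / N%:R; set v := n%:R / N%:R; set w := a%:R / N%:R.
  move=> e2 h1; rewrite max_l; lra.
have -> : (n - a)%N = 0%N by lia.
have := divN_le N0 (ltnW h); rewrite mul0r => h1.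
rewrite max_r //; lra.
Qed.

Lemma rlB (n a N : nat) : (0 < N)%N ->
  (minn (n + a) N)%:R / N%:R = Num.min (n%:R / N%:R + a%:R / N%:R) 1 :> K.
Proof.
move=> N0; rewrite -divN_D; case: (leqP (n + a) N) => h.
  rewrite min_l // -[X in _ <= X](divNN N0); exact: divN_le.
rewrite divNN // min_r // -[X in X <= _](divNN N0); apply: divN_le => //; exact: ltnW.
Qed.

Lemma rlC (c n d N : nat) (q : K) : (0 < N)%N -> (n <= c + d)%N -> d%:R / N%:R <= q ->
  Num.max (n%:R / N%:R - q) 0 <= c%:R / N%:R.
Proof.
move=> N0 h hq; rewrite ge_max divN_ge0 andbT.
have := divN_le N0 h; rewrite divN_D => h1; lra.
Qed.

Lemma rlD (c n d N : nat) (q : K) : (0 < N)%N -> (c <= n + d)%N -> (c <= N)%N ->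
  d%:R / N%:R <= q -> c%:R / N%:R <= Num.min (n%:R / N%:R + q) 1.
Proof.
move=> N0 h hN hq; rewrite le_min.
have := divN_le N0 h; rewrite divN_D => h1.
have := divN_le N0 hN; rewrite divNN // => h2.
apply/andP; split; lra.
Qed.

End Reals.
Unset Implicit Arguments. Set Strict Implicit.

Theorem theorem2 (K : realFieldType) (V : finType) (S P : V -> {set V})
    (L r : nat) (Y : finType) :
  (forall x : V, x \in S x) ->
  (forall x x' : V, x' \in S x -> x \in S x') ->
  (forall x : V, P x != set0) ->
  (0 < L)%N -> (r <= L)%N -> (1 < #|Y|)%N ->
  (forall x x' : V, x' \in S x -> #|P x| = #|P x'|) ->
  forall (f : sentence V L -> Y) (X : sentence V L) (y yB : Y),
  (forall c : Y, gRS K P f X c <= gRS K P f X y) ->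
  yB != y ->
  (forall c : Y, c != y -> gRS K P f X c <= gRS K P f X yB) ->
  exists fs : sentence V L -> Y,
    [/\ gRS K P fs X y = gRS K P f X y,
        gRS K P fs X yB = gRS K P f X yB,
        (* min_{X' in S_X} g_{fs}(X', y) = max(g_{fs}(X,y) - q_X, 0) *)
        (exists2 X', X' \in adv_set S r X &
           gRS K P fs X' y = Num.max (gRS K P fs X y - qsent K S P r X) 0)
        /\ (forall X', X' \in adv_set S r X ->
           Num.max (gRS K P fs X y - qsent K S P r X) 0 <= gRS K P fs X' y)
      & (* max_{X' in S_X} g_{fs}(X', yB) = min(g_{fs}(X,yB) + q_X, 1) *)
        (exists2 X', X' \in adv_set S r X &
           gRS K P fs X' yB = Num.min (gRS K P fs X yB + qsent K S P r X) 1)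
        /\ (forall X', X' \in adv_set S r X ->
           gRS K P fs X' yB <= Num.min (gRS K P fs X yB + qsent K S P r X) 1)].
Proof.
move=> HS Hsym HP L0 rL Y2 Hsz f X y yB _ neq _.
pose qi := fun i => qword K S P (X i).
have q01 : forall i, 0 <= qi i <= 1.
  by move=> i; have [h1 h2 _ _] := qw_props K (HS (X i)) (HP (X i)); rewrite h1 h2.
have [hsort cT hmin] := prod_take q01 rL.
move: hsort cT hmin.
set e := sort (relpre qi <=%R) (enum 'I_L).
set pT := \prod_(i in take r e) qi i.
move=> hsort cT hmin.
have hq : qsent K S P r X = 1 - pT by rewrite /qsent; congr (_ - _); exact: hsort.
set BX := boxX P X.
set N := #|BX|.
have N0 : (0 < N)%N by apply: box_gt0.
have szeq : forall X', X' \in adv_set S r X -> #|boxX P X'| = N.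
  move=> X'; rewrite inE => /andP [_ /forallP H].
  rewrite /N /BX /boxX !cardbox; apply: eq_bigr => i _; apply/esym/Hsz; exact: H.
have dN : forall X', X' \in adv_set S r X ->
    (#|BX :\: boxX P X'|)%:R / N%:R = 1 - \prod_i wratio K P (X i) (X' i) :> K.
  move=> X' _; rewrite -ratio_box -/BX -/N.
  have e1 := cardsID (boxX P X') BX.
  have h : N%:R / N%:R = #|BX :&: boxX P X'|%:R / N%:R + #|BX :\: boxX P X'|%:R / N%:R :> K by rewrite -divN_D e1.
  rewrite divNN // in h; lra.
have Q1 : forall X', X' \in adv_set S r X ->
    (#|BX :\: boxX P X'|)%:R / N%:R <= qsent K S P r X.
  move=> X' HX; rewrite dN // hq lerD2l lerN2.
  move: HX; rewrite inE => /andP [hC /forallP HS'].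
  set C := [set i | X' i != X i] in hC.
  apply: (le_trans (hmin C hC)).
  rewrite [X in _ <= X](eq_bigr (fun i => if i \in C then wratio K P (X i) (X' i) else 1)); last first.
    move=> i _; rewrite inE; case: eqP => [->|] //=; by rewrite ratio_same.
  rewrite -big_mkcond /=; apply: ler_prod => i _.
  have [h1 _ h3 _] := qw_props K (HS (X i)) (HP (X i)).
  by rewrite h1 h3.
pose xm x := odflt x [pick x' in S x | qword K S P x == wratio K P x x'].
have xmP : forall x, xm x \in S x /\ qword K S P x = wratio K P x (xm x).
  move=> x; rewrite /xm; case: pickP => [x' /andP [h1 /eqP h2] | none] //.
  have [_ _ _ [x' h1 h2]] := qw_props K (HS x) (HP x).
  by have := none x'; rewrite h1 h2 eqxx.
pose Xs : sentence V L := [ffun i => if i \in take r e then xm (X i) else X i].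
have XsA : Xs \in adv_set S r X.
  rewrite inE; apply/andP; split.
    rewrite -cT; apply: subset_leq_card; apply/subsetP => i; rewrite !inE ffunE.
    by case: ifP => //; rewrite eqxx.
  apply/forallP => i; rewrite ffunE; case: ifP => _; [exact: (xmP _).1 | exact: HS].
have qa : qsent K S P r X = (#|BX :\: boxX P Xs|)%:R / N%:R.
  rewrite dN // hq; congr (_ - _); rewrite /pT big_mkcond; apply: eq_bigr => i _.
  rewrite ffunE; case: ifP => _; [by rewrite -(xmP _).2 | by rewrite ratio_same].
have [fs [e1 e2 e3 e4]] := construct (BX := BX) (BS := boxX P Xs) f neq (szeq _ XsA).
exists fs; split.
- by rewrite !gRS_cnt e1.
- by rewrite !gRS_cnt e2.
- split.
    exists Xs => //; rewrite !gRS_cnt e3 e1 (szeq _ XsA) -/BX -/N qa; exact: rlA.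
  move=> X' HX; rewrite !gRS_cnt (szeq _ HX) -/BX -/N e1.
  have [b1 _] := cnt_bound fs y (szeq _ HX).
  rewrite e1 in b1; apply: rlC b1 (Q1 _ HX) => //.
- split.
    exists Xs => //; rewrite !gRS_cnt e4 e2 (szeq _ XsA) -/BX -/N qa; exact: rlB.
  move=> X' HX; rewrite !gRS_cnt (szeq _ HX) -/BX -/N e2.
  have [_ b2] := cnt_bound fs yB (szeq _ HX).
  rewrite e2 in b2; apply: rlD b2 _ (Q1 _ HX) => //.
  rewrite -(szeq _ HX); apply: subset_leq_card; apply/subsetP => Z; rewrite inE => /andP [] //.
Qed.
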